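(* Let $C$ be a field of characteristic zero, $L\in C[x][\partial]$ of order $r_L$, and $P\in C[x,y]$ with $\deg_yP=r_P$, square-free in $C(x)[y]$ and without non-constant divisors in $\bar C[y]$. Let $f_1,\dots,f_{r_L}$ be $C$-linearly independent solutions of $L$, $g_1,\dots,g_{r_P}$ distinct solutions of $P$, $V$ the $C$-span of all $f_i\circ g_j$, and $r=\dim_CV$. Let $A(x,y)\in C[x,y]^{(r+1)\times r_L}$ be a matrix such that $f\in V$ if and only if $(f,f',\dots,f^{(r)})^T$ lies in the column space of $\begin{pmatrix}A(x,g_1)&\cdots&A(x,g_{r_P})\end{pmatrix}$. Then there exists a matrix $B(y)\in C[y]^{(r_Lr_P-r)\times r_L}$ whose entries have degree at most $r_P-1$ such that the $(r_Lr_P+1)\times r_Lr_P$ matrix \[ \begin{pmatrix}A(x,g_1)&\cdots&A(x,g_{r_P})\\ B(g_1)&\cdots&B(g_{r_P})\end{pmatrix} \] has rank $r_Lr_P$.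
   Context: All functions $g_j$, $f_i\circ g_j$ and $f$ are regarded as elements of a common differential field $K\supseteq C(x)$ (derivation extending $d/dx$) whose field of constants is $C$; e.g. for $C=\mathbb C$, meromorphic functions on a connected open set where they are all analytic. Column spaces and ranks are taken over $K$. A solution $g$ of $P$ satisfies $P(x,g(x))=0$; a solution $f$ of $L$ satisfies $L(f)=0$. *)

(* Defs.v *)
From HB Require Import structures.
From mathcomp Require Import all_boot all_order all_algebra.
Set Implicit Arguments. Unset Strict Implicit. Unset Printing Implicit Defensive.
Import Order.TTheory GRing.Theory Num.Theory.
Local Open Scope ring_scope.

Definition is_derivation (K : fieldType) (D : K -> K) : Prop :=
  (forall a b, D (a + b) = D a + D b) /\ (forall a b, D (a * b) = D a * b + a * D b).

(* (K, D) is a differential field containing C(x) (C embedded by iota,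
   x transcendental over C, D x = 1, so D extends d/dx), whose field of
   constants is exactly (the image of) C. *)
Definition diff_ext_Cx (C K : fieldType) (iota : {rmorphism C -> K}) (D : K -> K)
    (x : K) : Prop :=
  [/\ is_derivation D, D x = 1,
      (forall p : {poly C}, p != 0 -> (map_poly iota p).[x] != 0)
    & (forall k : K, D k = 0 <-> exists c : C, k = iota c)].

Definition evC (C K : fieldType) (iota : {rmorphism C -> K}) (p : {poly C}) (t : K) : K :=
  (map_poly iota p).[t].

(* Evaluation of P(x,y) in C[x][y] (outer variable y) at x := t, y := u. *)
Definition ev2 (C K : fieldType) (iota : {rmorphism C -> K})
    (P : {poly {poly C}}) (t u : K) : K :=
  (map_poly (fun p => evC iota p t) P).[u].

Definition applyL (C K : fieldType) (iota : {rmorphism C -> K}) (D : K -> K)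
    (x : K) (L : seq {poly C}) (f : K) : K :=
  \sum_(k < size L) evC iota L`_k x * iter k D f.

Definition C_indep (C K : fieldType) (iota : {rmorphism C -> K}) (n : nat)
    (b : 'I_n -> K) : Prop :=
  forall c : 'I_n -> C, \sum_(k < n) iota (c k) * b k = 0 -> forall k, c k = 0.

Definition in_Cspan (C K : fieldType) (iota : {rmorphism C -> K}) (n : nat)
    (b : 'I_n -> K) (f : K) : Prop :=
  exists c : 'I_n -> C, f = \sum_(k < n) iota (c k) * b k.

Definition dimC_eq (C K : fieldType) (iota : {rmorphism C -> K}) (V : K -> Prop)
    (r : nat) : Prop :=
  exists b : 'I_r -> K,
    C_indep iota b /\ (forall f, V f <-> in_Cspan iota b f).

Definition wvec (K : fieldType) (D : K -> K) (r : nat) (f : K) : 'cV[K]_r.+1 :=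
  \col_(i < r.+1) iter i D f.

(* Horizontal block concatenation ( F 0 | F 1 | ... | F (q-1) ). *)
Definition blockrow (K : Type) (m q n : nat) (F : 'I_q -> 'M[K]_(m, n)) :
    'M[K]_(m, q * n) :=
  \matrix_(a < m, c < q * n) mxvec (\matrix_(j < q, k < n) F j a k) 0 c.

Definition sqfree_Cx_y (C : fieldType) (P : {poly {poly C}}) : Prop :=
  forall Q : {poly {fraction {poly C}}},
    (1 < size Q)%N -> ~~ (Q * Q %| map_poly (@FracField.tofrac _) P).

Definition is_alg_closure (C : fieldType) (E : closedFieldType)
    (iotaE : {rmorphism C -> E}) : Prop :=
  forall e : E, exists p : {poly C}, p != 0 /\ root (map_poly iotaE p) e.

Definition no_y_divisor (C : fieldType) (E : closedFieldType)
    (iotaE : {rmorphism C -> E}) (P : {poly {poly C}}) : Prop :=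
  forall Q : {poly E}, (1 < size Q)%N ->
    ~ exists R : {poly {poly E}},
        map_poly (map_poly iotaE) P = map_poly polyC Q * R.

(* Main.v *)
Require Import Defs.
From HB Require Import structures.
From mathcomp Require Import all_boot all_order all_algebra.
Import GRing.Theory.
Local Open Scope ring_scope.

Set Implicit Arguments. Unset Strict Implicit.
Section W.
Variables (C K : fieldType) (iota : {rmorphism C -> K}) (D : K -> K).
Hypothesis HD : is_derivation D.
Hypothesis Hc : forall k : K, D k = 0 -> exists c : C, k = iota c.

Lemma D0 : D 0 = 0.
Proof. have h := HD.1 0 0; rewrite addr0 in h; apply: (@addrI _ (D 0)); by rewrite -h addr0. Qed.
Lemma D1 : D 1 = 0.
Proof. have h := HD.2 1 1; rewrite !mul1r mulr1 in h; apply: (@addrI _ (D 1)); by rewrite -h addr0. Qed.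
Lemma Dsum I (r : seq I) (P : pred I) (F : I -> K) :
  D (\sum_(i <- r | P i) F i) = \sum_(i <- r | P i) D (F i).
Proof. exact: (big_morph D HD.1 D0). Qed.

Lemma wronsk n (b : 'I_n -> K) (Hb : C_indep iota b) (s : nat) :
  forall a : 'I_n -> K, (#|[pred i | a i != 0%R]| <= s)%N ->
  (forall k, (k < s)%N -> \sum_i a i * iter k D (b i) = 0) -> forall i, a i = 0.
Proof.
elim: s => [|s IH] a Hcard Hrel.
  move=> i; apply/eqP; apply/negPn/negP => Hi.
  have : (0 < #|[pred i | a i != 0%R]|)%N by apply/card_gt0P; exists i.
  by rewrite leqn0 in Hcard; rewrite (eqP Hcard).
case: (boolP [forall i, a i == 0]) => [/forallP H i|]; first exact/eqP.
rewrite negb_forall => /existsP [i0 Hi0].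
pose c := fun i => a i / a i0.
have Hc0 : forall k, (k < s.+1)%N -> \sum_i c i * iter k D (b i) = 0.
  move=> k Hk; rewrite /c.
  under eq_bigr do rewrite mulrAC.
  by rewrite -mulr_suml Hrel // mul0r.
have ci0 : c i0 = 1 by rewrite /c divff.
have HDc : forall i, D (c i) = 0.
  apply: IH.
    rewrite -ltnS; apply: leq_trans Hcard.
    rewrite [X in (_ < X)%N](cardD1 i0) inE Hi0 add1n ltnS.
    apply: subset_leq_card; apply/subsetP => i; rewrite !inE.
    case: (eqVneq i i0) => [->|Hne]; first by rewrite ci0 D1 eqxx.
    apply: contraNN => /eqP Ha; rewrite /c Ha mul0r D0 //.
  move=> k Hk.
  have := congr1 D (Hc0 k (ltnW Hk)).
  rewrite Dsum D0.
  under eq_bigr do rewrite HD.2.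
  rewrite big_split /= [X in _ + X](_ : _ = 0) ?addr0 //; exact: (Hc0 k.+1).
have [cc Hcc] : exists cc : 'I_n -> C, forall i, c i = iota (cc i).
  have ex i : exists c0, c i == iota c0.
    by have [c0 ->] := @Hc _ (HDc i); exists c0.
  by exists (fun i => xchoose (ex i)) => i; apply/eqP/(xchooseP (ex i)).
have := Hb cc.
have -> : \sum_(k < n) iota (cc k) * b k = 0.
  by rewrite -[RHS](Hc0 0%N) //; apply: eq_bigr => i _; rewrite Hcc.
move=> /(_ erefl i0) Hz.
by move: ci0; rewrite Hcc Hz rmorph0 => /eqP; rewrite eq_sym oner_eq0.
Qed.
End W.
Section Sel.
Variables (K : fieldType) (T : finType) (n : nat) (e : T -> 'rV[K]_n).
Definition Sel m (tau : 'I_m -> option T) : 'M[K]_(m, n) :=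
  \matrix_(a, c) (if tau a is Some t then e t 0 c else 0).
Lemma row_Sel m (tau : 'I_m -> option T) a :
  row a (Sel tau) = if tau a is Some t then e t else 0.
Proof. by apply/rowP => c; rewrite !mxE; case: (tau a) => [t|]; rewrite ?mxE. Qed.

Hypothesis He : forall p (U : 'M[K]_(p, n)), (forall t, (e t <= U)%MS) -> (1%:M <= U)%MS.

Lemma sub_col_l p q (U : 'M[K]_(p, n)) (V : 'M[K]_(q, n)) : (U <= col_mx U V)%MS.
Proof. by rewrite -addsmxE addsmxSl. Qed.
Lemma sub_col_r p q (U : 'M[K]_(p, n)) (V : 'M[K]_(q, n)) : (V <= col_mx U V)%MS.
Proof. by rewrite -addsmxE addsmxSr. Qed.

Lemma select m : forall p (U : 'M[K]_(p, n)), (n - m <= \rank U)%N ->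
  exists tau : 'I_m -> option T, (1%:M <= col_mx U (Sel tau))%MS.
Proof.
elim: m => [|m IH] p U HU.
  exists (fun _ => None); apply: submx_trans (sub_col_l _ _).
  rewrite sub1mx /row_full eqn_leq rank_leq_col /=.
  by rewrite subn0 in HU.
case: (boolP [forall t, e t <= U]%MS) => [/forallP Hall|].
  exists (fun _ => None); apply: submx_trans (sub_col_l _ _).
  exact: He.
rewrite negb_forall => /existsP [t Ht].
have HU' : (n - m <= \rank (col_mx U (e t)))%N.
  have lt : (U < col_mx U (e t))%MS.
    by rewrite ltmxE sub_col_l /= -addsmxE addsmx_sub submx_refl.
  rewrite ltmxErank in lt; case/andP: lt => _ lt.
  apply: (@leq_trans (\rank U).+1); last exact: lt.
  have h : (n - m <= (n - m.+1).+1)%N by rewrite subnS; case: (n - m)%N.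
  by apply: leq_trans h _; rewrite ltnS.
have [tau' Htau'] := IH _ _ HU'.
pose tau : 'I_m.+1 -> option T := fun a => if unlift ord0 a is Some j then tau' j else Some t.
exists tau.
apply: submx_trans Htau' _.
rewrite col_mx_sub; apply/andP; split.
  rewrite col_mx_sub sub_col_l /=.
  apply: submx_trans (sub_col_r _ _).
  have <- : row ord0 (Sel tau) = e t by rewrite row_Sel /tau unlift_none.
  exact: row_sub.
apply: submx_trans (sub_col_r _ _).
apply/row_subP => j; rewrite row_Sel.
have <- : row (lift ord0 j) (Sel tau) = (if tau' j is Some t then e t else 0).
  by rewrite row_Sel /tau liftK.
exact: row_sub.
Qed.
End Sel.

Section Span.
Variables (K : fieldType) (rP rL : nat) (g : 'I_rP -> K).
Hypothesis Hginj : injective g.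
Definition Et (t : 'I_rL * 'I_rP) : 'M[K]_(rP, rL) :=
  \matrix_(j, k) (if k == t.1 then g j ^+ t.2 else 0).
Definition ev (t : 'I_rL * 'I_rP) : 'rV[K]_(rP * rL) := mxvec (Et t).

Lemma span p (U : 'M[K]_(p, rP * rL)) : (forall t, (ev t <= U)%MS) -> (1%:M <= U)%MS.
Proof.
move=> H; apply/row_subP => c; rewrite row1.
case/mxvec_indexP: c => j k; rewrite -mxvec_delta.
pose V : 'M[K]_rP := \matrix_(d, j) g j ^+ d.
have VU : V \in unitmx.
  have -> : V = Vandermonde rP (\row_j g j) by apply/matrixP => a b; rewrite !mxE.
  rewrite unitmxE det_Vandermonde unitfE; apply/prodf_neq0 => i _.
  apply/prodf_neq0 => i' Hii'; rewrite !mxE subr_eq0; apply/eqP => /Hginj Heq.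
  by move: Hii'; rewrite Heq ltnn.
pose W := invmx V.
have WV := mulVmx VU.
have -> : delta_mx j k = \sum_(d < rP) W j d *: Et (k, d).
  apply/matrixP => j' k'; rewrite summxE !mxE.
  under eq_bigr do rewrite !mxE /=.
  case: (eqVneq k' k) => [_|Hk].
    have := congr1 (fun M : 'M[K]_rP => M j j') WV.
    rewrite !mxE andbT eq_sym => <-.
    by apply: eq_bigr => d _; rewrite /V !mxE.
  rewrite andbF big1 // => d _; rewrite mulr0 //.
rewrite linear_sum; apply: summx_sub => d _; rewrite linearZ; apply: scalemx_sub.
exact: H.
Qed.
End Span.
Theorem lemma6
  (C : fieldType) (Cchar0 : [pchar C] =i pred0)
  (K : fieldType) (iota : {rmorphism C -> K}) (D : K -> K) (x : K)
  (HK : diff_ext_Cx iota D x)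
  (* L in C[x][d] of order rL *)
  (rL : nat) (L : seq {poly C}) (HLsize : size L = rL.+1) (HLlead : L`_rL != 0)
  (* P in C[x][y] of y-degree rP *)
  (rP : nat) (P : {poly {poly C}}) (HPsize : size P = rP.+1)
  (HPsqf : sqfree_Cx_y P)
  (E : closedFieldType) (iotaE : {rmorphism C -> E})
  (HE : is_alg_closure iotaE) (HPnody : no_y_divisor iotaE P)
  (* f_1..f_rL : C-linearly independent solutions of L *)
  (f : 'I_rL -> K) (Hfsol : forall i, applyL iota D x L (f i) = 0)
  (Hfind : C_indep iota f)
  (* g_1..g_rP : distinct solutions of P *)
  (g : 'I_rP -> K) (Hgsol : forall j, ev2 iota P x (g j) = 0)
  (Hginj : injective g)
  (* fg i j k represents f_i^(k) o g_j; fg i j 0 = f_i o g_j *)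
  (fg : 'I_rL -> 'I_rP -> nat -> K)
  (Hchain : forall i j k, D (fg i j k) = fg i j k.+1 * D (g j))
  (HLcomp : forall i j, \sum_(k < size L) evC iota L`_k (g j) * fg i j k = 0)
  (* V = C-span of all f_i o g_j, r = dim_C V *)
  (r : nat)
  (Hr : dimC_eq iota
          (fun h => exists c : 'I_rL -> 'I_rP -> C,
              h = \sum_(i < rL) \sum_(j < rP) iota (c i j) * fg i j 0) r)
  (A : 'M[{poly {poly C}}]_(r.+1, rL))
  (HA : forall h : K,
      (exists c : 'I_rL -> 'I_rP -> C,
          h = \sum_(i < rL) \sum_(j < rP) iota (c i j) * fg i j 0)
      <-> ((wvec D r h)^T <=
           (blockrow (fun j : 'I_rP => map_mx (fun p => ev2 iota p x (g j)) A))^T)%MS) :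
  exists B : 'M[{poly C}]_(rL * rP - r, rL),
    (forall a b, (size (B a b) <= rP)%N) /\
    \rank (col_mx
             (blockrow (fun j : 'I_rP => map_mx (fun p => ev2 iota p x (g j)) A))
             (blockrow (fun j : 'I_rP => map_mx (fun p => evC iota p (g j)) B)))
      = (rL * rP)%N.
Proof.
case: HK => HD Dx Htr Hconst.
have Hc : forall k, D k = 0 -> exists c, k = iota c by move=> k /Hconst.
set M := blockrow (fun j : 'I_rP => map_mx (fun p => ev2 iota p x (g j)) A).
have rankM : (r <= \rank M)%N.
  case: Hr => b [Hbind HbV].
  pose Wt : 'M[K]_(r, r.+1) := \matrix_(i, k) iter k D (b i).
  have sub : (Wt <= M^T)%MS.
    apply/row_subP => i.
    have <- : (wvec D r (b i))^T = row i Wt by apply/rowP => k; rewrite !mxE.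
    apply/(HA (b i)).1/(HbV (b i)).2.
    exists (fun k => (k == i)%:R); rewrite (bigD1 i) //= big1 ?addr0.
      by rewrite eqxx rmorph1 mul1r.
    by move=> k /negbTE ->; rewrite rmorph0 mul0r.
  rewrite -mxrank_tr; apply: leq_trans (mxrankS sub).
  have : row_free Wt.
    rewrite -kermx_eq0; apply/eqP/row_matrixP => i; rewrite row0.
    set u := row i (kermx Wt).
    have uW : u *m Wt = 0 by apply/sub_kermxP; exact: row_sub.
    apply/rowP => a; rewrite [RHS]mxE.
    apply: (wronsk HD Hc Hbind (s := r) (a := fun i => u 0 i)).
      by apply: leq_trans (max_card _) _; rewrite card_ord.
    move=> k Hk.
    have := congr1 (fun N : 'M[K]_(1, r.+1) => N 0 (Ordinal (leq_trans Hk (leqnSn r)))) uW.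
    rewrite !mxE => h; rewrite -[RHS]h; apply: eq_bigr => i' _; rewrite /Wt !mxE //.
  by move/eqP ->.
have Hsel : (rP * rL - (rL * rP - r) <= \rank M)%N.
  apply: leq_trans rankM; rewrite mulnC leq_subLR addnC -leq_subLR leqnn //.
have [tau Htau] := select (@span K rP rL g Hginj) Hsel.
pose B : 'M[{poly C}]_(rL * rP - r, rL) :=
  \matrix_(a, k) (if tau a is Some t then (if k == t.1 then 'X^(t.2) else 0) else 0).
exists B; split.
  move=> a k; rewrite mxE; case: (tau a) => [[k0 d]|]; last by rewrite size_poly0.
  by case: ifP => _ /=; rewrite ?size_polyXn ?size_poly0 //.
have -> : blockrow (fun j : 'I_rP => map_mx (fun p => evC iota p (g j)) B)
          = Sel (ev g) tau.
  apply/matrixP => a c; rewrite !mxE; case/mxvec_indexP: c => j k.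
  rewrite !mxvecE !mxE; case: (tau a) => [t|]; last by rewrite /evC map_poly0 horner0.
  rewrite /ev mxvecE mxE; case: ifP => _.
    by rewrite /evC map_polyXn hornerXn.
  by rewrite /evC map_poly0 horner0.
apply/eqP; rewrite eqn_leq; apply/andP; split.
  by apply: leq_trans (rank_leq_col _) _; rewrite mulnC.
by apply: leq_trans (mxrankS Htau); rewrite mxrank1 mulnC.
Qed.
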